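(* There exist continuous increasing convex functions $\Phi:[1,\infty)\to[1,\infty)$ such that $$\int_1^\infty\log\Phi(t)\,\frac{dt}{t^2}=\infty,\qquad \liminf_{t\to\infty}\frac{\log\Phi(t)}{\log t}=1,$$ and $\Phi(t)\ge t$ for all $t\in[1,\infty)$. *)

(* Defs.v *)
From HB Require Import structures.
From mathcomp Require Import all_boot all_order all_algebra.
From mathcomp Require Import all_classical all_reals all_analysis.
Set Implicit Arguments. Unset Strict Implicit. Unset Printing Implicit Defensive.
Import Order.TTheory GRing.Theory Num.Theory.
Import numFieldNormedType.Exports.
Local Open Scope classical_set_scope.
Local Open Scope ring_scope.

Definition convex_on_ge1 (R : realType) (f : R -> R) : Prop :=
  forall x y l : R, 1 <= x -> 1 <= y -> 0 <= l -> l <= 1 ->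
    f (l * x + (1 - l) * y) <= l * f x + (1 - l) * f y.

Definition increasing_on_ge1 (R : realType) (f : R -> R) : Prop :=
  forall x y : R, 1 <= x -> x < y -> f x < f y.

(* Main.v *)
Require Import Defs.
From HB Require Import structures.
From mathcomp Require Import all_boot all_order all_algebra.
From mathcomp Require Import all_classical all_reals all_analysis.
From mathcomp Require Import ring lra.
From mathcomp Require Import measurable_realfun.
Import Order.TTheory GRing.Theory Num.Theory.
Import numFieldNormedType.Exports.
Local Open Scope classical_set_scope.
Local Open Scope ring_scope.

Module Aux.
Section Constr.
Variable R : realType.

Definition cf (j : nat) (x : R) : R := expR (j%:R * (x + 2) ^+ 2).

Fixpoint st (j : nat) : R * R :=
  match j with
  | 0 => (1, 1)
  | j'.+1 => let p := st j' in
             let s' := p.2 + cf j' p.1 in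
             (s' ^+ j'.+1 + p.1 + 1, s')
  end.

Definition aa j := (st j).1.
Definition ss j := (st j).2.
Definition cc j := cf j (aa j).

Lemma ssS j : ss j.+1 = ss j + cc j. Proof. by []. Qed.
Lemma aaS j : aa j.+1 = ss j.+1 ^+ j.+1 + aa j + 1. Proof. by []. Qed.

Lemma cc_gt0 j : 0 < cc j. Proof. exact: expR_gt0. Qed.

Lemma ssE j : ss j = 1 + \sum_(k < j) cc k.
Proof.
elim: j => [|j IH]; first by rewrite big_ord0 addr0.
by rewrite ssS IH big_ord_recr /= addrA.
Qed.

Lemma ss_ge1 j : 1 <= ss j.
Proof.
rewrite ssE lerDl; apply: sumr_ge0 => k _; exact: ltW (cc_gt0 k).
Qed.

Lemma aa_ge j : j.+1%:R <= aa j.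
Proof.
elim: j => [|j IH]; first by rewrite /aa /=.
rewrite aaS.
have h1 : 1 <= ss j.+1 ^+ j.+1 by apply: exprn_ege1; exact: ss_ge1.
rewrite -[j.+2]addn1 natrD; lra.
Qed.

Lemma aa_ge1 j : 1 <= aa j.
Proof. apply: le_trans (aa_ge j); by rewrite ler1n. Qed.

Lemma aa_mono k m : (k <= m)%N -> aa k <= aa m.
Proof.
move=> /subnK <-; elim: (m - k)%N => [|d IH]; first by rewrite add0n.
rewrite addSn aaS.
have h1 : 1 <= ss (d + k).+1 ^+ (d + k).+1 by apply: exprn_ege1; exact: ss_ge1.
lra.
Qed.

Definition hinge (a t : R) := Num.max 0 (t - a).

Definition PhiN (N : nat) (t : R) := t + \sum_(k < N) cc k * hinge (aa k) t.

Definition Phi (t : R) := PhiN (Num.trunc t) t.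

Lemma hinge_ge0 a t : 0 <= hinge a t.
Proof. by rewrite /hinge le_max lexx. Qed.

Lemma hinge0 a t : t <= a -> hinge a t = 0.
Proof. by move=> h; rewrite /hinge max_l // subr_le0. Qed.

Lemma PhiN_add N d t : (forall k, (N <= k)%N -> t <= aa k) ->
  PhiN (N + d) t = PhiN N t.
Proof.
move=> H; elim: d => [|d IH]; first by rewrite addn0.
rewrite addnS /PhiN big_ord_recr /= hinge0 ?H ?leq_addr // mulr0 addr0.
exact: IH.
Qed.

Lemma PhiN_le N M t : (N <= M)%N -> PhiN N t <= PhiN M t.
Proof.
move=> /subnK <-; rewrite addnC; elim: (M - N)%N => [|d IH]; first by rewrite addn0.
rewrite addnS /PhiN big_ord_recr /= addrA; apply: le_trans IH _.
rewrite lerDl; apply: mulr_ge0; [exact: ltW (cc_gt0 _)|exact: hinge_ge0].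
Qed.

Lemma trunc_tail t k : (Num.trunc t <= k)%N -> t <= aa k.
Proof.
move=> h; apply: le_trans (aa_ge k); apply: ltW; apply: lt_le_trans (truncnS_gt t) _.
by rewrite ler_nat.
Qed.

Lemma Phi_eq N t : (forall k, (N <= k)%N -> t <= aa k) -> Phi t = PhiN N t.
Proof.
move=> H; rewrite /Phi.
have -> : PhiN (Num.trunc t) t = PhiN (maxn N (Num.trunc t)) t.
  rewrite -(subnKC (leq_maxr N (Num.trunc t))) PhiN_add //.
  by move=> k; exact: trunc_tail.
by rewrite -(subnKC (leq_maxl N (Num.trunc t))) PhiN_add.
Qed.

Lemma Phi_ge N t : PhiN N t <= Phi t.
Proof.
rewrite (@Phi_eq (maxn N (Num.trunc t))); first by apply: PhiN_le; exact: leq_maxl.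
move=> k hk; apply: trunc_tail; exact: leq_trans (leq_maxr _ _) hk.
Qed.

Lemma Phi_ge_id t : t <= Phi t.
Proof. apply: le_trans (Phi_ge 0 t); by rewrite /PhiN big_ord0 addr0. Qed.

End Constr.
Arguments hinge {R}. Arguments PhiN {R}. Arguments Phi {R}.
Arguments hinge_ge0 {R}. Arguments hinge0 {R}. Arguments PhiN_add {R}.
Arguments PhiN_le {R}. Arguments trunc_tail {R}. Arguments Phi_eq {R}.
Arguments Phi_ge {R}. Arguments Phi_ge_id {R}.
Section Part2.
Variable R : realType.
Local Notation aa := (@aa R).
Local Notation cc := (@cc R).
Local Notation PhiN := (@PhiN R).
Local Notation Phi := (@Phi R).
Local Notation hinge := (@hinge R).

Lemma hinge_convex (a x y l : R) : 0 <= l -> l <= 1 ->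
  hinge a (l * x + (1 - l) * y) <= l * hinge a x + (1 - l) * hinge a y.
Proof.
move=> l0 l1; have hx0 := hinge_ge0 a x; have hy0 := hinge_ge0 a y.
have hx : x - a <= hinge a x by rewrite /hinge le_max lexx orbT.
have hy : y - a <= hinge a y by rewrite /hinge le_max lexx orbT.
rewrite /hinge ge_max; apply/andP; split; rewrite -/(hinge a x) -/(hinge a y); nra.
Qed.

Lemma PhiN_convex N x y l : 0 <= l -> l <= 1 ->
  PhiN N (l * x + (1 - l) * y) <= l * PhiN N x + (1 - l) * PhiN N y.
Proof.
move=> l0 l1; rewrite /PhiN.
set z := l * x + (1 - l) * y.
have S : \sum_(k < N) cc k * hinge (aa k) z <=
   l * \sum_(k < N) cc k * hinge (aa k) x + (1 - l) * \sum_(k < N) cc k * hinge (aa k) y.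
  rewrite !mulr_sumr -big_split /=.
  apply: ler_sum => k _.
  have c0 := ltW (cc_gt0 R k).
  have := hinge_convex (aa k) x y l l0 l1; rewrite -/z; nra.
rewrite /z; nra.
Qed.

Lemma Phi_convex : convex_on_ge1 Phi.
Proof.
move=> x y l _ _ l0 l1.
set N := maxn (Num.trunc x) (Num.trunc y).
have Hx : forall k, (N <= k)%N -> x <= aa k.
  move=> k hk; apply: trunc_tail; exact: leq_trans (leq_maxl _ _) hk.
have Hy : forall k, (N <= k)%N -> y <= aa k.
  move=> k hk; apply: trunc_tail; exact: leq_trans (leq_maxr _ _) hk.
rewrite (Phi_eq _ _ Hx) (Phi_eq _ _ Hy) (@Phi_eq _ N); first exact: PhiN_convex.
move=> k hk; have := Hx k hk; have := Hy k hk; nra.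
Qed.

Lemma hinge_mono a x y : x <= y -> hinge a x <= hinge a y.
Proof.
move=> h; rewrite /hinge ge_max le_max lexx /= le_max lerB //= orbT //.
Qed.

Lemma Phi_incr : increasing_on_ge1 Phi.
Proof.
move=> x y _ xy.
set N := maxn (Num.trunc x) (Num.trunc y).
have Hx : forall k, (N <= k)%N -> x <= aa k.
  move=> k hk; apply: trunc_tail; exact: leq_trans (leq_maxl _ _) hk.
have Hy : forall k, (N <= k)%N -> y <= aa k.
  move=> k hk; apply: trunc_tail; exact: leq_trans (leq_maxr _ _) hk.
rewrite (Phi_eq _ _ Hx) (Phi_eq _ _ Hy) /PhiN; apply: ltr_leD => //.
apply: ler_sum => k _; apply: ler_wpM2l; first exact: ltW (cc_gt0 R k).
exact: hinge_mono (ltW xy).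
Qed.

Lemma hinge_cont a : continuous (hinge a).
Proof.
have H : continuous ((cst (0:R)) \max (fun t : R => t - a)).
  apply: max_fun_continuous; first exact: cst_continuous.
  move=> z; apply: cvgB; [exact: cvg_id|exact: cvg_cst].
exact: H.
Qed.

Lemma PhiN_cont N : continuous (PhiN N).
Proof.
elim: N => [|N IH].
  move=> t; rewrite /PhiN.
  have -> : (fun t : R => t + \sum_(k < 0) cc k * hinge (aa k) t) = id.
    by apply: funext => z; rewrite big_ord0 addr0.
  exact: cvg_id.
have -> : PhiN N.+1 = (fun t => PhiN N t + cc N * hinge (aa N) t).
  by apply: funext => z; rewrite /PhiN big_ord_recr /= addrA.
move=> t; apply: cvgD; first exact: IH.
apply: cvgM; [exact: cvg_cst|exact: hinge_cont].
Qed.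

Lemma Phi_cont : continuous Phi.
Proof.
move=> x.
set N := (Num.trunc x).+1.
have H : {near x, PhiN N =1 Phi}.
  near=> t; apply/esym/Phi_eq => k hk.
  apply: le_trans (aa_ge R k); apply: ltW.
  have tx : t < x + 1 by near: t; apply: lt_nbhsl; lra.
  apply: lt_le_trans tx _.
  have h1 := truncnS_gt x.
  have h2 : (Num.trunc x).+2%:R <= k.+1%:R :> R by rewrite ler_nat.
  rewrite -addn1 natrD in h2; lra.
apply: cvg_trans (near_eq_cvg H) _.
rewrite (@Phi_eq _ N x); first exact: PhiN_cont.
move=> k hk; apply: trunc_tail; exact: leq_trans (leqnSn _) hk.
Unshelve. all: by end_near.
Qed.
End Part2.
Section Part3.
Variable R : realType.
Local Notation aa := (@aa R).
Local Notation cc := (@cc R).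
Local Notation PhiN := (@PhiN R).
Local Notation Phi := (@Phi R).
Local Notation hinge := (@hinge R).

Definition gg (t : R) := ln (Phi t) / t ^+ 2.

Lemma gg_cont t : 0 < t -> {for t, continuous gg}.
Proof.
move=> t0.
have P0 : 0 < Phi t by apply: lt_le_trans t0 (Phi_ge_id t).
apply: (@continuousM _ _ (fun t => ln (Phi t)) (fun t : R => (t ^+ 2)^-1)).
  apply: (@continuous_comp _ _ _ Phi (@ln R)); first exact: Phi_cont.
  exact: continuous_ln.
apply: (@continuousV _ _ (fun t : R => t ^+ 2)).
  by rewrite expf_neq0 // gt_eqF.
apply: (@continuousM _ _ id id); exact: cvg_id.
Qed.

Lemma gg_meas : measurable_fun (`[1, +oo[ : set R) (EFin \o gg).
Proof.
apply/measurable_EFinP.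
apply: (@measurable_funS _ _ _ _ (`]0, +oo[ : set R)); first exact: measurable_itv.
  move=> x; rewrite /= !in_itv /= andbT => h; lra.
apply: open_continuous_measurable_fun.
  exact: itv_open_ends_open.
move=> x; rewrite inE /= in_itv /= andbT; exact: gg_cont.
Qed.

Lemma gg_ge0 t : 1 <= t -> 0 <= gg t.
Proof.
move=> t1; rewrite /gg; apply: divr_ge0; last exact: sqr_ge0.
apply: ln_ge0; apply: le_trans t1 (Phi_ge_id t).
Qed.

Lemma gg_big n t : aa n + 1 <= t -> t <= aa n + 2 -> n%:R <= gg t.
Proof.
move=> h1 h2.
have a1 := aa_ge1 R n.
have t0 : 0 < t by lra.
have c0 := cc_gt0 R n.
have hc : cc n <= Phi t.
  apply: le_trans (Phi_ge n.+1 t).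
  rewrite /PhiN big_ord_recr /=.
  have : 0 <= \sum_(i < n) cc i * hinge (aa i) t.
    apply: sumr_ge0 => i _; apply: mulr_ge0; [exact: ltW (cc_gt0 R i)|exact: hinge_ge0].
  have : 1 <= hinge (aa n) t by rewrite /hinge le_max; apply/orP; right; lra.
  nra.
have hl : ln (cc n) <= ln (Phi t).
  by rewrite ler_ln // posrE; lra.
rewrite /cc /cf expRK in hl.
rewrite /gg ler_pdivlMr; last by rewrite exprn_gt0.
apply: le_trans hl.
have n0 : 0 <= n%:R :> R by [].
have : t ^+ 2 <= (aa n + 2) ^+ 2 by rewrite ler_sqr ?nnegrE; lra.
nra.
Qed.

End Part3.
Section Part4.
Variable R : realType.
Local Notation aa := (@aa R).
Local Notation ss := (@ss R).
Local Notation cc := (@cc R).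
Local Notation PhiN := (@PhiN R).
Local Notation Phi := (@Phi R).
Local Notation hinge := (@hinge R).
Local Notation gg := (@gg R).

Lemma int_big n :
  (n%:R%:E <= \int[lebesgue_measure]_(t in `[1%R, +oo[) (gg t)%:E)%E.
Proof.
have a1 := aa_ge1 R n.
set I := ([set` `[aa n + 1, aa n + 2]] : set R).
have mI : measurable I by exact: measurable_itv.
have sub : I `<=` `[1%R, +oo[.
  move=> x; rewrite /I /= !in_itv /= andbT => /andP[h _]; lra.
have mg : measurable_fun I (EFin \o gg) by exact: measurable_funS (measurable_itv _) sub (@gg_meas R).
have H1 : (\int[lebesgue_measure]_(t in I) (gg t)%:E <=
          \int[lebesgue_measure]_(t in `[1%R, +oo[) (gg t)%:E)%E.
  have := (ge0_subset_integral lebesgue_measure mI (measurable_itv _) (@gg_meas R)).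
  move=> HH; apply: HH; last exact: sub.
  move=> x; rewrite /= in_itv /= andbT => h; rewrite lee_fin; exact: gg_ge0.
apply: le_trans H1.
have H2 : (\int[lebesgue_measure]_(t in I) (cst n%:R%:E t) <=
          \int[lebesgue_measure]_(t in I) (gg t)%:E)%E.
  have HH := ge0_le_integral lebesgue_measure mI (f1 := cst n%:R%:E) (f2 := EFin \o gg).
  apply: HH; [|exact: measurable_cst|exact: mg|].
  - by move=> x _; rewrite lee_fin.
  - move=> x; rewrite /I /= in_itv /= => /andP[h1 h2]; rewrite lee_fin; exact: gg_big.
apply: le_trans H2.
rewrite integral_cst //.
have HI : (lebesgue_measure I = 1)%E.
  rewrite /I lebesgue_measure_itv /= lte_fin ltrD2l ltr1n /=.
  by rewrite -EFinB (_ : aa n + 2 - (aa n + 1) = 1) //; ring.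
have -> : forall z : \bar R, z = 1%E -> (n%:R%:E * z)%E = n%:R%:E by move=> z ->; rewrite mule1.
  by [].
exact: HI.
Qed.

Lemma int_infty :
  (\int[lebesgue_measure]_(t in `[1%R, +oo[) (gg t)%:E = +oo)%E.
Proof.
move: int_big; case: (\int[lebesgue_measure]_(t in `[1%R, +oo[) (gg t)%:E)%E => [r| |] H //.
  exfalso; have := H (Num.trunc r).+1; rewrite lee_fin; have := truncnS_gt r; lra.
by have := H 0%N.
Qed.

Lemma ratio_lb t : 1 < t -> 1 <= ln (Phi t) / ln t.
Proof.
move=> t1; have l0 : 0 < ln t by exact: ln_gt0.
rewrite ler_pdivlMr // mul1r ler_ln ?posrE //; first exact: Phi_ge_id.
  lra.
apply: lt_le_trans (Phi_ge_id t); lra.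
Qed.

Lemma ratio_ub j : ln (Phi (aa j.+1)) / ln (aa j.+1) <= 1 + j.+1%:R^-1.
Proof.
set t := aa j.+1.
have t2 : 2 <= t by have := aa_ge R j.+1; rewrite -[j.+2]addn2 natrD; have : 0 <= j%:R :> R by []; lra.
have L0 : 0 < ln t by apply: ln_gt0; lra.
have s1 := ss_ge1 R j.+1.
have hP : Phi t <= t * ss j.+1.
  rewrite (Phi_eq j.+1 t); last by move=> k hk; exact: aa_mono.
  rewrite /PhiN ssE mulrDr mulr1 lerD2l mulr_sumr.
  apply: ler_sum => k _; rewrite mulrC; apply: ler_wpM2r; first exact: ltW (cc_gt0 R k).
  rewrite /hinge ge_max; apply/andP; split; first lra.
  have := aa_ge1 R k; lra.
have hs : ss j.+1 ^+ j.+1 <= t.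
  rewrite /t aaS; have := aa_ge1 R j; lra.
have hl1 : ln (Phi t) <= ln t + ln (ss j.+1).
  have P0 : 0 < Phi t by apply: lt_le_trans (Phi_ge_id t); lra.
  have T0 : 0 < t by lra.
  have S0 : 0 < ss j.+1 by lra.
  have TS : 0 < t * ss j.+1 by apply: mulr_gt0.
  by rewrite -lnM ?posrE // ler_ln ?posrE.
have m0 : 0 < j.+1%:R :> R by [].
have hl2 : ln (ss j.+1) * j.+1%:R <= ln t.
  rewrite mulr_natr -lnXn; last lra.
  rewrite ler_ln ?posrE //; last lra.
  by apply: exprn_gt0; lra.
have hl3 : ln (ss j.+1) <= ln t / j.+1%:R by rewrite ler_pdivlMr.
rewrite ler_pdivrMr // mulrDl mul1r [_^-1 * _]mulrC.
by apply: le_trans hl1 _; rewrite lerD2l.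
Qed.

End Part4.
Section Part5.
Variable R : realType.
Local Notation aa := (@aa R).
Local Notation Phi := (@Phi R).

Lemma liminf_one :
  limf_einf (fun t : R => (ln (Phi t) / ln t)%:E) (pinfty_nbhs R) = 1%E.
Proof.
rewrite limf_einfE; apply/eqP; rewrite eq_le; apply/andP; split.
- apply: ge_ereal_sup => _ [V [M [Mr HM]] <-].
  apply/lee_addgt0Pr => e e0.
  set j := maxn (Num.trunc M) (Num.trunc e^-1).
  have hM : M < aa j.+1.
    apply: lt_le_trans (truncnS_gt M) _.
    apply: le_trans (aa_ge R j.+1).
    by rewrite ler_nat ltnS ltnW // ltnS leq_maxl.
  apply: le_trans (ereal_inf_lbound _) _.
    by exists (aa j.+1); [exact: HM|].
  rewrite lee_fin; apply: le_trans (ratio_ub R j) _; rewrite lerD2l.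
  have m0 : 0 < j.+1%:R :> R by [].
  rewrite invf_ple ?posrE //.
  apply: ltW; apply: lt_le_trans (truncnS_gt e^-1) _.
  by rewrite ler_nat ltnS leq_maxr.
- set V0 := [set t : R | 1 < t].
  have FV0 : pinfty_nbhs R V0 by exists 1; split => //.
  apply: le_trans (ereal_sup_ubound _); last by exists V0.
  apply: le_ereal_inf_tmp => _ [t t1 <-].
  rewrite lee_fin; exact: ratio_lb.
Qed.

End Part5.
End Aux.
Import Aux.

Theorem lemma6p11 (R : realType) :
  exists Phi : R -> R,
    {within `[1, +oo[, continuous Phi} /\
    increasing_on_ge1 Phi /\
    convex_on_ge1 Phi /\
    (forall t : R, 1 <= t -> 1 <= Phi t) /\
    (\int[lebesgue_measure]_(t in `[1%R, +oo[) (ln (Phi t) / t ^+ 2)%:E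
       = +oo)%E /\
    limf_einf (fun t : R => (ln (Phi t) / ln t)%:E) (pinfty_nbhs R) = 1%E /\
    (forall t : R, 1 <= t -> t <= Phi t).
Proof.
exists (@Aux.Phi R); split; first exact: continuous_subspaceT (@Phi_cont R).
split; first exact: Phi_incr.
split; first exact: Phi_convex.
split; first by move=> t t1; apply: le_trans t1 (Phi_ge_id t).
split; first exact: (int_infty R).
split; first exact: liminf_one.
by move=> t _; exact: Phi_ge_id.
Qed.
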